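(* Let $\mathcal U\in\mathrm{Ch}(A'B',AB)$ be a two-qubit unitary channel ($|A'|=|B'|=|A|=|B|=2$) with Choi state $\Phi^{\mathcal U}_{R_AAR_BB}$. Then the state \[ \rho_{R_BB}:=\frac{\sqrt{\Phi^{\mathcal U}_{R_BB}}}{\operatorname{tr}\sqrt{\Phi^{\mathcal U}_{R_BB}}} \] is the Choi state of a unital qubit channel from $B'$ to $B$; that is, $\operatorname{tr}_B\rho_{R_BB}=\mathbb 1_{R_B}/2$ and $\operatorname{tr}_{R_B}\rho_{R_BB}=\mathbb 1_B/2$.
   Context: Maximally entangled state $\Phi_{RX}:=\frac1{|X|}\sum_{i,j}|ii\rangle\langle jj|$; Choi state of a bipartite channel $\mathcal N$ from $A'B'$ to $AB$: $\Phi^{\mathcal N}_{R_AAR_BB}:=(\mathrm{id}_{R_AR_B}\otimes\mathcal N)(\Phi_{R_AA'}\otimes\Phi_{R_BB'})$ with $R_A\simeq A'$, $R_B\simeq B'$; $\Phi^{\mathcal U}_{R_BB}$ denotes its marginal on $R_BB$. *)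

(* Defs.v *)
From HB Require Import structures.
From mathcomp Require Import all_boot all_order all_algebra.
From mathcomp Require Export spectral sesquilinear.
From mathcomp Require Export mxtens.
Set Implicit Arguments.
Unset Strict Implicit.
Unset Printing Implicit Defensive.
Import Order.TTheory GRing.Theory Num.Theory.
Local Open Scope ring_scope.
Local Open Scope sesquilinear_scope.

Section QDefs.
Variable C : numClosedFieldType.

(* Composite index: the pair (i, j) of 'I_m * 'I_n is the index i*n+j of 'I_(m*n). *)
Definition tidx {m n} (i : 'I_m) (j : 'I_n) : 'I_(m * n) := mxtens_index (i, j).
Definition fstidx {m n} (k : 'I_(m * n)) : 'I_m := (mxtens_unindex k).1.
Definition sndidx {m n} (k : 'I_(m * n)) : 'I_n := (mxtens_unindex k).2.

Definition maxent (n : nat) : 'M[C]_(n * n) :=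
  (n%:R)^-1 *: \matrix_(k, l)
     ((fstidx k == sndidx k) && (fstidx l == sndidx l))%:R.

Definition ptrace2 {m n} (X : 'M[C]_(m * n)) : 'M[C]_m :=
  \matrix_(i, j) \sum_(k < n) X (tidx i k) (tidx j k).
Definition ptrace1 {m n} (X : 'M[C]_(m * n)) : 'M[C]_n :=
  \matrix_(i, j) \sum_(k < m) X (tidx k i) (tidx k j).

(* (id_M (x) N) for a (linear) map N : 'M_p -> 'M_q, acting blockwise. *)
Definition id_tens {m p q} (N : 'M[C]_p -> 'M[C]_q) (X : 'M[C]_(m * p))
  : 'M[C]_(m * q) :=
  \matrix_(k, l) N (\matrix_(u, v) X (tidx (fstidx k) u) (tidx (fstidx l) v))
                   (sndidx k) (sndidx l).

(* Reordering of tensor factors  (X1 X2)(X3 X4) -> (X1 X3)(X2 X4). *)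
Definition swap_mid_idx {a b c d} (k : 'I_((a * c) * (b * d))) : 'I_((a * b) * (c * d)) :=
  tidx (tidx (fstidx (fstidx k)) (fstidx (sndidx k)))
       (tidx (sndidx (fstidx k)) (sndidx (sndidx k))).
Definition swap_mid {a b c d} (X : 'M[C]_((a * b) * (c * d))) : 'M[C]_((a * c) * (b * d)) :=
  \matrix_(k, l) X (swap_mid_idx k) (swap_mid_idx l).

(* Choi state of a bipartite channel N from A'B' to AB, as an operator on
   R_A A R_B B (ordered as (R_A A)(R_B B)):
   (id_{R_A R_B} (x) N)(Phi_{R_A A'} (x) Phi_{R_B B'}). *)
Definition choi_bip {dA' dB' dA dB : nat}
  (N : 'M[C]_(dA' * dB') -> 'M[C]_(dA * dB)) : 'M[C]_((dA' * dA) * (dB' * dB)) :=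
  swap_mid (id_tens N (swap_mid (tensmx (maxent dA') (maxent dB')))).

Definition marg_RBB {m n} (X : 'M[C]_(m * n)) : 'M[C]_n := ptrace1 X.

Definition unitary_channel {n} (U : 'M[C]_n) (X : 'M[C]_n) : 'M[C]_n :=
  U *m X *m U ^t*.

(* Principal matrix square root via the spectral decomposition
   A = P^dagger diag(lambda) P (P unitary): sqrt A = P^dagger diag(sqrt lambda) P,
   with sqrtC the nonnegative square root on nonnegative reals. *)
Definition sqrtm {n} (A : 'M[C]_n) : 'M[C]_n :=
  (spectralmx A) ^t* *m diag_mx (map_mx sqrtC (spectral_diag A)) *m spectralmx A.

End QDefs.

(* Main.v *)
Require Import Defs.
From HB Require Import structures.
From mathcomp Require Import all_boot all_order all_algebra.
From mathcomp Require Import spectral sesquilinear mxtens.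
From mathcomp Require Import ring.
Import Order.TTheory GRing.Theory Num.Theory.
Local Open Scope ring_scope.
Local Open Scope sesquilinear_scope.
Lemma fst_tidx m n (i : 'I_m) (j : 'I_n) : fstidx (tidx i j) = i.
Proof. by rewrite /fstidx /tidx mxtens_indexK. Qed.
Lemma snd_tidx m n (i : 'I_m) (j : 'I_n) : sndidx (tidx i j) = j.
Proof. by rewrite /sndidx /tidx mxtens_indexK. Qed.
Lemma tidxK m n (k : 'I_(m*n)) : tidx (fstidx k) (sndidx k) = k.
Proof. by rewrite /fstidx /sndidx /tidx -surjective_pairing mxtens_unindexK. Qed.
Lemma tidx_inj m n (i i' : 'I_m) (j j' : 'I_n) : (tidx i j == tidx i' j') = (i == i') && (j == j').
Proof.
apply/eqP/andP => [E|[/eqP-> /eqP->]//]; split; apply/eqP.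
  by have := congr1 fstidx E; rewrite !fst_tidx.
by have := congr1 sndidx E; rewrite !snd_tidx.
Qed.
Lemma sum_tidx (R : nmodType) m n (F : 'I_(m*n) -> R) :
  \sum_(k < m*n) F k = \sum_(i < m) \sum_(j < n) F (tidx i j).
Proof.
rewrite pair_bigA /=.
rewrite (reindex (fun p : 'I_m * 'I_n => tidx p.1 p.2)) //=.
exists (fun k => (fstidx k, sndidx k)) => [[i j] _|k _] /=.
  by rewrite fst_tidx snd_tidx.
by rewrite tidxK.
Qed.


Lemma choiE (C : numClosedFieldType) (U : 'M[C]_(2*2)) ra a rb b ra' a' rb' b' :
  @choi_bip C 2 2 2 2 (unitary_channel U) (tidx (tidx ra a) (tidx rb b)) (tidx (tidx ra' a') (tidx rb' b'))
  = 4%:R^-1 * (U (tidx a b) (tidx ra rb) * (U (tidx a' b') (tidx ra' rb'))^* ).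
Proof.
rewrite /choi_bip /swap_mid /id_tens /swap_mid_idx !mxE !fst_tidx !snd_tidx.
rewrite /unitary_channel.
set Y := (\matrix_(u, v) _).
have -> : Y = 4%:R^-1 *: delta_mx (tidx ra rb) (tidx ra' rb').
  apply/matrixP => u v; rewrite /Y !mxE !fst_tidx !snd_tidx.
  rewrite /tidx !mxtens_indexK /= -/(tidx _ _) !fst_tidx !snd_tidx.
  rewrite -[u]tidxK -[v]tidxK !tidx_inj !fst_tidx !snd_tidx.
  rewrite (eq_sym ra) (eq_sym ra') (eq_sym rb) (eq_sym rb').
  case: eqP => _; case: eqP => _; case: eqP => _; case: eqP => _ /=;
    rewrite ?mulr0 ?mul0r ?mulr1 //.
  by rewrite -invfM -natrM.
rewrite (bigD1 (tidx ra' rb')) //= big1 ?addr0 => [|j /negbTE jq]; last first.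
  rewrite !mxE big1 ?mul0r // => k _; rewrite !mxE jq andbF mulr0 mulr0 //.
rewrite !mxE (bigD1 (tidx ra rb)) //= big1 ?addr0 => [|k /negbTE kp]; last first.
  by rewrite !mxE kp mulr0 mulr0.
rewrite !mxE !eqxx /=; ring.
Qed.

Definition Wm {C : numClosedFieldType} (U : 'M[C]_(2*2)) : 'M[C]_(2*2) :=
  \matrix_(k, j) U (tidx (sndidx j) (sndidx k)) (tidx (fstidx j) (fstidx k)).

Lemma margE (C : numClosedFieldType) (U : 'M[C]_(2*2)) :
  marg_RBB (@choi_bip C 2 2 2 2 (unitary_channel U)) = 4%:R^-1 *: (Wm U *m (Wm U)^t*).
Proof.
apply/matrixP => k l; rewrite /marg_RBB /ptrace1 !mxE.
rewrite sum_tidx [in RHS]sum_tidx big_distrr /=.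
apply: eq_bigr => ra _; rewrite big_distrr /=; apply: eq_bigr => a _.
rewrite -[k]tidxK -[l]tidxK choiE !mxE !fst_tidx !snd_tidx.
by rewrite mulrA.
Qed.

Lemma unit_rows (C : numClosedFieldType) (U : 'M[C]_(2*2)) : U \is unitarymx ->
  forall x y, \sum_q U x q * (U y q)^* = (x == y)%:R.
Proof.
move=> /unitarymxP UU x y; have := congr1 (fun A : 'M[C]_(2*2) => A x y) UU.
by rewrite !mxE => <-; apply: eq_bigr => q _; rewrite !mxE.
Qed.

Lemma unit_cols (C : numClosedFieldType) (U : 'M[C]_(2*2)) : U \is unitarymx ->
  forall x y, \sum_p U p x * (U p y)^* = (x == y)%:R.
Proof.
move=> /unitarymxP UU x y.
have UU' : U ^t* *m U = 1%:M by apply: mulmx1C.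
have := congr1 (fun A : 'M[C]_(2*2) => A y x) UU'.
rewrite !mxE eq_sym => <-; apply: eq_bigr => q _; rewrite !mxE mulrC //.
Qed.

Lemma quarter2 (C : numClosedFieldType) : (4%:R^-1 : C) * 2%:R = 2%:R^-1.
Proof.
by rewrite -[4%N]/(2*2)%N natrM invfM -mulrA mulVf ?mulr1 // pnatr_eq0.
Qed.

Lemma ptr2M (C : numClosedFieldType) (U : 'M[C]_(2*2)) : U \is unitarymx ->
  ptrace2 (4%:R^-1 *: (Wm U *m (Wm U)^t*)) = 2%:R^-1 *: 1%:M.
Proof.
move=> Uu; apply/matrixP => i j; rewrite !mxE.
under eq_bigr do rewrite !mxE sum_tidx.
rewrite -big_distrr /= exchange_big /=.
under eq_bigr => ra _ do rewrite exchange_big /=.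
under eq_bigr => ra _ do under eq_bigr => a _ do under eq_bigr => b _ do
  rewrite !mxE !fst_tidx !snd_tidx.
under eq_bigr => ra _ do rewrite -(@sum_tidx _ 2 2 (fun p => U p (tidx ra i) * (U p (tidx ra j))^*)).
under eq_bigr => ra _ do rewrite unit_cols // tidx_inj eqxx /=.
rewrite sumr_const card_ord.
case: (i == j); rewrite /= ?mulr0 ?mulr1n ?mulr0n //.
  by rewrite mulr1 quarter2.
by rewrite mul0rn mulr0.
Qed.

Lemma ptr1M (C : numClosedFieldType) (U : 'M[C]_(2*2)) : U \is unitarymx ->
  ptrace1 (4%:R^-1 *: (Wm U *m (Wm U)^t*)) = 2%:R^-1 *: 1%:M.
Proof.
move=> Uu; apply/matrixP => i j; rewrite !mxE.
under eq_bigr do rewrite !mxE sum_tidx.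
rewrite -big_distrr /=.
under eq_bigr => rb _ do rewrite exchange_big /=.
rewrite exchange_big /=.
under eq_bigr => a _ do rewrite exchange_big /=.
under eq_bigr => a _ do under eq_bigr => ra _ do under eq_bigr => rb _ do
  rewrite !mxE !fst_tidx !snd_tidx.
under eq_bigr => a _ do rewrite -(@sum_tidx _ 2 2 (fun q => U (tidx a i) q * (U (tidx a j) q)^*)).
under eq_bigr => a _ do rewrite unit_rows // tidx_inj eqxx /=.
rewrite sumr_const card_ord.
case: (i == j); rewrite /= ?mulr0 ?mulr1n ?mulr0n //.
  by rewrite mulr1 quarter2.
by rewrite mul0rn mulr0.
Qed.

Definition i0 : 'I_2 := ord0.
Definition i1 : 'I_2 := ord_max.

Definition inV {C : numClosedFieldType} (X : 'M[C]_(2*2)) :=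
  [/\ ptrace1 X i0 i1 = 0, ptrace1 X i1 i0 = 0 & ptrace1 X i0 i0 = ptrace1 X i1 i1] /\
  [/\ ptrace2 X i0 i1 = 0, ptrace2 X i1 i0 = 0 & ptrace2 X i0 i0 = ptrace2 X i1 i1].

Definition ent {C : numClosedFieldType} (X : 'M[C]_(2*2)) (a b : nat) : C :=
  X (inord a) (inord b).
Lemma entriesE {C : numClosedFieldType} (X : 'M[C]_(2*2)) i j :
  X i j = ent X (val i) (val j).
Proof. by rewrite /ent !inord_val. Qed.

Lemma Vsubst {C : numClosedFieldType} (X : 'M[C]_(2*2)) :
  [/\ ent X 0 1 + (ent X 2 3 + 0) = 0, ent X 1 0 + (ent X 3 2 + 0) = 0
    & ent X 0 0 + (ent X 2 2 + 0) = ent X 1 1 + (ent X 3 3 + 0)] /\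
  [/\ ent X 0 2 + (ent X 1 3 + 0) = 0, ent X 2 0 + (ent X 3 1 + 0) = 0
    & ent X 0 0 + (ent X 1 1 + 0) = ent X 2 2 + (ent X 3 3 + 0)] ->
  [/\ ent X 2 3 = - ent X 0 1, ent X 3 2 = - ent X 1 0, ent X 1 3 = - ent X 0 2,
      ent X 3 1 = - ent X 2 0 & ent X 2 2 = ent X 1 1 /\ ent X 3 3 = ent X 0 0].
Proof.
rewrite !addr0 => -[[e1 e2 e3] [e4 e5 e6]].
have e22 : ent X 2 2 = ent X 1 1.
  apply/eqP; rewrite -subr_eq0.
  have : 2%:R * (ent X 2 2 - ent X 1 1) = 0.
    have -> : 2%:R * (ent X 2 2 - ent X 1 1) =
      (ent X 0 0 + ent X 2 2 - (ent X 1 1 + ent X 3 3)) -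
      (ent X 0 0 + ent X 1 1 - (ent X 2 2 + ent X 3 3)) by ring.
    by rewrite e3 e6 !subrr.
  by move/eqP; rewrite mulf_eq0 pnatr_eq0.
split.
- by apply/eqP; rewrite -addr_eq0 addrC e1.
- by apply/eqP; rewrite -addr_eq0 addrC e2.
- by apply/eqP; rewrite -addr_eq0 addrC e4.
- by apply/eqP; rewrite -addr_eq0 addrC e5.
split => //.
by move: e6; rewrite e22 addrC => /addrI.
Qed.

Lemma jordan (C : numClosedFieldType) (X Y : 'M[C]_(2*2)) :
  inV X -> inV Y -> inV (X * Y + Y * X).
Proof.
rewrite /inV /ptrace1 /ptrace2 !mxE !big_ord_recl !big_ord0 !mxE /=.
rewrite !sum_tidx !big_ord_recl !big_ord0 /=.
rewrite !(entriesE X) !(entriesE Y) /= /bump /= ?(mul0n, mul1n, add0n, addn0, addn1).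
move=> /Vsubst [-> -> -> -> [-> ->]] /Vsubst [-> -> -> -> [-> ->]].
split; split; ring.
Qed.


Lemma ptrace1D {C : numClosedFieldType} (X Y : 'M[C]_(2*2)) i j :
  ptrace1 (X + Y) i j = ptrace1 X i j + ptrace1 Y i j.
Proof. by rewrite !mxE -big_split; apply: eq_bigr => k _; rewrite !mxE. Qed.
Lemma ptrace2D {C : numClosedFieldType} (X Y : 'M[C]_(2*2)) i j :
  ptrace2 (X + Y) i j = ptrace2 X i j + ptrace2 Y i j.
Proof. by rewrite !mxE -big_split; apply: eq_bigr => k _; rewrite !mxE. Qed.
Lemma ptrace1Z {C : numClosedFieldType} (a : C) (X : 'M[C]_(2*2)) i j :
  ptrace1 (a *: X) i j = a * ptrace1 X i j.
Proof. by rewrite !mxE big_distrr; apply: eq_bigr => k _; rewrite !mxE. Qed.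
Lemma ptrace2Z {C : numClosedFieldType} (a : C) (X : 'M[C]_(2*2)) i j :
  ptrace2 (a *: X) i j = a * ptrace2 X i j.
Proof. by rewrite !mxE big_distrr; apply: eq_bigr => k _; rewrite !mxE. Qed.

Lemma inVD {C : numClosedFieldType} (X Y : 'M[C]_(2*2)) : inV X -> inV Y -> inV (X + Y).
Proof.
move=> [[a1 a2 a3] [a4 a5 a6]] [[b1 b2 b3] [b4 b5 b6]].
by split; split; rewrite ?ptrace1D ?ptrace2D ?a1 ?a2 ?a3 ?a4 ?a5 ?a6 ?b1 ?b2 ?b3 ?b4 ?b5 ?b6 ?addr0.
Qed.
Lemma inVZ {C : numClosedFieldType} a (X : 'M[C]_(2*2)) : inV X -> inV (a *: X).
Proof.
move=> [[a1 a2 a3] [a4 a5 a6]].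
by split; split; rewrite ?ptrace1Z ?ptrace2Z ?a1 ?a2 ?a3 ?a4 ?a5 ?a6 ?mulr0.
Qed.
Lemma ord2_cases (i : 'I_2) : i = i0 \/ i = i1.
Proof. case: i => [[|[|n]] Hi]; [left; exact: val_inj | right; exact: val_inj | by []]. Qed.

Lemma inV_scalar {C : numClosedFieldType} (X : 'M[C]_(2*2)) a b :
  ptrace1 X = a *: 1%:M -> ptrace2 X = b *: 1%:M -> inV X.
Proof. rewrite /inV => -> ->; split; split; rewrite !mxE /= ?mulr0 //. Qed.

Lemma inV0 {C : numClosedFieldType} : inV (0 : 'M[C]_(2*2)).
Proof.
by apply: (@inV_scalar _ _ 0 0); apply/matrixP => i j; rewrite !mxE mul0r big1 // => k _; rewrite mxE.
Qed.

Lemma inV1 {C : numClosedFieldType} : inV (1%:M : 'M[C]_(2*2)).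
Proof.
apply: (@inV_scalar _ _ 2%:R 2%:R); apply/matrixP => i j; rewrite !mxE big_ord_recl big_ord_recl big_ord0 !mxE !tidx_inj /=;
 case: (i == j); rewrite /= ?mulr1 ?mulr0 ?addr0 //.
Qed.

Lemma inV_ptrace1 {C : numClosedFieldType} (X : 'M[C]_(2*2)) :
  inV X -> ptrace1 X = ptrace1 X i0 i0 *: 1%:M.
Proof.
move=> [[a1 a2 a3] _]; apply/matrixP => i j; rewrite [RHS]mxE [X in _ * X]mxE.
by case: (ord2_cases i) => ->; case: (ord2_cases j) => ->; rewrite ?a1 ?a2 -?a3 /= ?mulr1 ?mulr0.
Qed.
Lemma inV_ptrace2 {C : numClosedFieldType} (X : 'M[C]_(2*2)) :
  inV X -> ptrace2 X = ptrace2 X i0 i0 *: 1%:M.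
Proof.
move=> [_ [a1 a2 a3]]; apply/matrixP => i j; rewrite [RHS]mxE [X in _ * X]mxE.
by case: (ord2_cases i) => ->; case: (ord2_cases j) => ->; rewrite ?a1 ?a2 -?a3 /= ?mulr1 ?mulr0.
Qed.

Lemma inVX {C : numClosedFieldType} (X : 'M[C]_(2*2)) n : inV X -> inV (X ^+ n).
Proof.
move=> VX; elim: n => [|n IH]; first by rewrite expr0; apply: inV1.
have -> : X ^+ n.+1 = 2%:R^-1 *: (X * X ^+ n + X ^+ n * X).
  rewrite -exprS -exprSr -mulr2n -scaler_nat scalerA mulVf ?scale1r //.
  by rewrite pnatr_eq0.
by apply: inVZ; apply: jordan.
Qed.

Lemma inV_horner {C : numClosedFieldType} (X : 'M[C]_(2*2)) (q : {poly C}) :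
  inV X -> inV (horner_mx X q).
Proof.
move=> VX; rewrite -[q]coefK poly_def rmorph_sum /=.
apply: (big_ind inV) => [|A B|i _]; first exact: inV0.
  exact: inVD.
by rewrite linearZ /= rmorphXn /= horner_mx_X; apply: inVZ; apply: inVX.
Qed.

Lemma interp (F : fieldType) (f : F -> F) (s : seq F) :
  exists q : {poly F}, forall x, x \in s -> q.[x] = f x.
Proof.
elim: s => [|a s [q Hq]]; first by exists 0.
case: (boolP (a \in s)) => as_.
  by exists q => x; rewrite inE => /orP[/eqP->|]; apply: Hq.
set p := \prod_(b <- s) ('X - b%:P).
have pa : p.[a] != 0.
  by have : ~~ root p a by rewrite /p root_prod_XsubC.
exists (q + ((f a - q.[a]) / p.[a]) *: p) => x; rewrite inE => /orP[/eqP->|xs].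
  by rewrite hornerD hornerZ mulfVK // addrC subrK.
have : root p x by rewrite /p root_prod_XsubC.
by move/rootP; rewrite hornerD hornerZ => ->; rewrite mulr0 addr0 Hq.
Qed.


Lemma herm_gram {C : numClosedFieldType} (W : 'M[C]_(2*2)) :
  (4%:R^-1 *: (W *m W^t*))^t* = 4%:R^-1 *: (W *m W^t*).
Proof.
have h : (4%:R^-1 : C)^* = 4%:R^-1 by rewrite fmorphV /= conjC_nat.
apply/matrixP => i j; rewrite !mxE rmorphM /= h rmorph_sum.
congr (_ * _); apply: eq_bigr => k _; rewrite !mxE rmorphM /= conjCK mulrC.
by [].
Qed.

Lemma gram_diag_ge0 {C : numClosedFieldType} n (A : 'M[C]_n) i : 0 <= (A *m A^t*) i i.
Proof. rewrite mxE; apply: sumr_ge0 => k _; rewrite !mxE; exact: mul_conjC_ge0. Qed.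

Lemma tr_ptrace2 {C : numClosedFieldType} (X : 'M[C]_(2*2)) : \tr X = \sum_i ptrace2 X i i.
Proof. by rewrite /mxtrace sum_tidx; apply: eq_bigr => i _; rewrite mxE. Qed.
Lemma tr_ptrace1 {C : numClosedFieldType} (X : 'M[C]_(2*2)) : \tr X = \sum_i ptrace1 X i i.
Proof. by rewrite /mxtrace sum_tidx exchange_big; apply: eq_bigr => i _; rewrite mxE. Qed.

Lemma spectral_facts {C : numClosedFieldType} (W : 'M[C]_(2*2)) :
  let M := 4%:R^-1 *: (W *m W^t*) in
  inV M -> \tr M = 1 ->
  inV (sqrtm M) /\ \tr (sqrtm M) != 0.
Proof.
move=> M VM trM.
have Mn : M \is normalmx by apply/normalmxP; rewrite /M herm_gram.
set P := spectralmx M; set d := spectral_diag M.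
have HM : M = invmx P *m diag_mx d *m P by apply/orthomx_spectralP.
have Pu : P \is unitarymx by apply: spectral_unitarymx.
have PP : P *m P^t* = 1%:M by apply/unitarymxP.
have PP' : P^t* *m P = 1%:M by apply: mulmx1C.
have iP : invmx P = P^t* by apply: invmx_unitary.
rewrite iP in HM.
have HD : diag_mx d = P *m M *m P^t*.
  by rewrite HM !mulmxA PP mul1mx -!mulmxA PP mulmx1.
have dge0 : forall i, 0 <= d 0 i.
  move=> i; have -> : d 0 i = diag_mx d i i by rewrite mxE eqxx mulr1n.
  rewrite HD /M -scalemxAr -scalemxAl mxE; apply: mulr_ge0.
    by rewrite invr_ge0 ler0n.
  have -> : P *m (W *m W^t*) *m P^t* = (P *m W) *m (P *m W)^t*.
    by rewrite trmx_mul map_mxM !mulmxA.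
  exact: gram_diag_ge0.
have sumd : \sum_i d 0 i = 1.
  by rewrite -mxtrace_diag HD mxtrace_mulC mulmxA PP' mul1mx.
have [q Hq] := @interp _ sqrtC [seq d 0 i | i <- enum 'I_(2*2)].
have SE : sqrtm M = horner_mx M q.
  rewrite /sqrtm -/P -/d.
  have -> : map_mx sqrtC d = map_mx (horner q) d.
    apply/matrixP => i j; rewrite !mxE (ord1 i) Hq //.
    by apply: map_f; rewrite mem_enum.
  rewrite -horner_mx_diag {1}HM -iP horner_mx_uconjC //.
  exact: spectral_unit.
split; first by rewrite SE; apply: inV_horner.
rewrite /sqrtm -/P -/d mxtrace_mulC mulmxA PP mul1mx mxtrace_diag.
apply/negP => /eqP H0.
have H : forall i, (d ^ sqrtC) 0 i = 0.
  by move=> i; apply: (psumr_eq0P _ H0) => // j _; rewrite mxE sqrtC_ge0.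
have : \sum_i d 0 i = 0.
  apply: big1 => i _; apply/eqP; rewrite -sqrtC_eq0; move: (H i); rewrite mxE => ->.
  by [].
by rewrite sumd => /eqP; rewrite oner_eq0.
Qed.

Lemma normalize_V {C : numClosedFieldType} (X : 'M[C]_(2*2)) :
  inV X -> \tr X != 0 ->
  ptrace2 ((\tr X)^-1 *: X) = 2%:R^-1 *: 1%:M /\ ptrace1 ((\tr X)^-1 *: X) = 2%:R^-1 *: 1%:M.
Proof.
move=> VX trX.
have key : forall (Y : 'M[C]_2) (t : C), Y = t *: 1%:M -> \tr X = \sum_i Y i i ->
  (\tr X)^-1 *: Y = 2%:R^-1 *: 1%:M.
  move=> Y t -> E; move: trX; rewrite E big_ord_recl big_ord_recl big_ord0 !mxE !eqxx /= mulr1 addr0.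
  rewrite -mulr2n => t0; have t0' : t != 0 by apply: contra t0 => /eqP ->; rewrite mul0rn.
  by rewrite scalerA -[t *+ 2]mulr_natr invfM mulrAC mulVf ?mul1r.
split.
- apply/matrixP => i j; rewrite ptrace2Z.
  have := key _ _ (inV_ptrace2 _ VX) (tr_ptrace2 X).
  by move/matrixP/(_ i j); rewrite !mxE.
- apply/matrixP => i j; rewrite ptrace1Z.
  have := key _ _ (inV_ptrace1 _ VX) (tr_ptrace1 X).
  by move/matrixP/(_ i j); rewrite !mxE.
Qed.


Theorem lemma9 (C : numClosedFieldType) (U : 'M[C]_(2 * 2)) :
  U \is unitarymx ->
  let PhiU := @choi_bip C 2 2 2 2 (unitary_channel U) in
  let S := sqrtm (marg_RBB PhiU) in
  let rho := (\tr S)^-1 *: S in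
  ptrace2 rho = (2%:R)^-1 *: 1%:M /\ ptrace1 rho = (2%:R)^-1 *: 1%:M.
Proof.
move=> Uu PhiU S rho.
rewrite /rho /S /PhiU margE.
have VM : inV (4%:R^-1 *: (Wm U *m (Wm U)^t*)).
  exact: (@inV_scalar _ _ _ _ (ptr1M _ _ Uu) (ptr2M _ _ Uu)).
have trM : \tr (4%:R^-1 *: (Wm U *m (Wm U)^t*)) = 1.
  rewrite tr_ptrace2 ptr2M // big_ord_recl big_ord_recl big_ord0 !mxE !eqxx /= mulr1 addr0.
  by rewrite -mulr2n -[_ *+ 2]mulr_natr mulVf // pnatr_eq0.
have [VS trS] := spectral_facts _ VM trM.
exact: normalize_V.
Qed.
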